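(* Let $c:[0,\infty)\to[0,\infty)$ be a concave, increasing function with $c(0)=0$, extended to $\mathbb{R}$ by $c(-x)=c(x)$, such that $c^2$ is differentiable and its derivative $(c^2)'$ is strictly convex on $[0,\infty)$. Then there is no satisfactory configuration (with respect to $c$) of $k>3$ vectors in which exactly one mass is negative. Moreover, if a satisfactory configuration $e_1,e_2,e_3$ with $k=3$ has exactly one negative mass, then $e_1,e_2,e_3$ are coplanar.
   Context: Let $d\ge 2$. A set of unit vectors $e_1,\dots,e_k\in\mathbb{R}^d$ with non-zero real masses $m_1,\dots,m_k$ is called a satisfactory configuration (with respect to $c$) if $m_1+\dots+m_k=0$ and for every $i\neq j$ $$\langle e_i,e_j\rangle \leq \frac{c^2(m_i+m_j)-c^2(m_i)-c^2(m_j)}{2c(m_i)c(m_j)}.$$ *)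

(* Defs.v *)
From HB Require Import structures.
From mathcomp Require Import all_boot all_order all_algebra.
From mathcomp Require Import all_classical all_reals all_analysis.
Set Implicit Arguments. Unset Strict Implicit. Unset Printing Implicit Defensive.
Import Order.TTheory GRing.Theory Num.Theory.
Import numFieldNormedType.Exports.
Local Open Scope ring_scope.
Local Open Scope classical_set_scope.

Definition dotv (R : realType) (d : nat) (u v : 'rV[R]_d) : R :=
  \sum_(j < d) u 0 j * v 0 j.

Definition satisfactory (R : realType) (c : R -> R) (d k : nat)
    (e : 'I_k -> 'rV[R]_d) (m : 'I_k -> R) : Prop :=
  [/\ (forall i, dotv (e i) (e i) = 1),
      (forall i, m i != 0),
      \sum_(i < k) m i = 0 &
      (forall i j, i != j ->
         dotv (e i) (e j) <=
         ((c (m i + m j)) ^+ 2 - (c (m i)) ^+ 2 - (c (m j)) ^+ 2)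
           / (2 * c (m i) * c (m j)))].

Definition exactly_one_negative (R : realType) (k : nat) (m : 'I_k -> R) : Prop :=
  #|[set i | m i < 0]| = 1%N.

Definition concave_on_nonneg (R : realType) (c : R -> R) : Prop :=
  forall x y t : R, 0 <= x -> 0 <= y -> 0 <= t -> t <= 1 ->
    t * c x + (1 - t) * c y <= c (t * x + (1 - t) * y).

Definition strictly_convex_on_nonneg (R : realType) (f : R -> R) : Prop :=
  forall x y t : R, 0 <= x -> 0 <= y -> x != y -> 0 < t -> t < 1 ->
    f (t * x + (1 - t) * y) < t * f x + (1 - t) * f y.

Definition admissible_c (R : realType) (c : R -> R) : Prop :=
  [/\ c 0 = 0 /\ (forall x, 0 <= x -> 0 <= c x),
      (forall x y, 0 <= x -> x < y -> c x < c y),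
      concave_on_nonneg c,
      (forall x, c (- x) = c x) &
      (* c^2 is differentiable on [0,oo) (one-sided at 0) with derivative
         dc2, and dc2 is strictly convex on [0,oo) *)
      (exists dc2 : R -> R,
        [/\ (forall x : R, 0 < x -> is_derive x (1:R) (fun y : R => (c y) ^+ 2) (dc2 x)),
            (fun h => h^-1 * ((c h) ^+ 2 - (c 0) ^+ 2)) @ 0^'+ --> dc2 0 &
            strictly_convex_on_nonneg dc2])].

(* Main.v *)
Require Import Defs.
From HB Require Import structures.
From mathcomp Require Import all_boot all_order all_algebra.
From mathcomp Require Import all_classical all_reals all_analysis.
Import Order.TTheory GRing.Theory Num.Theory.
Import numFieldNormedType.Exports.
From mathcomp Require Import ring lra zify.
Local Open Scope ring_scope.


Lemma shift_is_derive (R : realType) (f : R -> R) (a t df : R) :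
  is_derive (t + a) 1 f df -> is_derive t 1 (fun s => f (s + a)) df.
Proof.
case=> Hd Heq.
have E : (fun h : R => h^-1 *: (((fun s => f (s + a)) \o shift t) (h *: 1) - f (t + a)))
   = (fun h : R => h^-1 *: ((f \o shift (t + a)) (h *: 1) - f (t + a))).
  by apply/funext => h /=; rewrite addrA.
apply: DeriveDef; first by rewrite /derivable E.
by rewrite /derive E -Heq.
Qed.

Lemma conv_incr (R : realType) (g : R -> R) : strictly_convex_on_nonneg g ->
  forall a x h : R, 0 <= a -> 0 < x -> 0 < h ->
  g (a + x) + g (a + h) < g a + g (a + x + h).
Proof.
move=> Hg a x h a0 x0 h0.
have xh0 : 0 < x + h by lra.
set t := h / (x + h).
have t0 : 0 < t by rewrite /t divr_gt0.
have t1 : t < 1 by rewrite /t ltr_pdivrMr // mul1r; lra.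
have neq : a != a + x + h by apply/negP => /eqP; lra.
have H1 := Hg a (a + x + h) t a0 (ltac:(lra)) neq t0 t1.
have H2 := Hg a (a + x + h) (1 - t) a0 (ltac:(lra)) neq (ltac:(lra)) (ltac:(lra)).
have E1 : t * a + (1 - t) * (a + x + h) = a + x.
  by rewrite /t; field; rewrite gt_eqF.
have E2 : (1 - t) * a + (1 - (1 - t)) * (a + x + h) = a + h.
  by rewrite /t; field; rewrite gt_eqF.
rewrite E1 in H1; rewrite E2 in H2.
lra.
Qed.
Section KeySec.
Local Open Scope classical_set_scope.
Local Open Scope ring_scope.

Lemma key (R : realType) (f dc2 : R -> R)
  (Hd : forall x : R, 0 < x -> is_derive x (1:R) f (dc2 x))
  (H0 : f @ 0^'+ --> f 0) (Hc : strictly_convex_on_nonneg dc2)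
  (x y u : R) : 0 < x -> 0 < y -> 0 < u ->
  f (x + y) - f x - f y + f 0 < f (u + (x + y)) - f (u + x) - f (u + y) + f u.
Proof.
move=> x0 y0 u0.
pose g (a : R) := fun t => f (t + a).
have Dg (a t : R) : 0 < t + a -> is_derive t (1:R) (g a) (dc2 (t + a)).
  by move=> ta; apply: shift_is_derive; apply: Hd.
pose psi := g (x + y) - g x - g y + f.
pose dpsi t := dc2 (t + (x + y)) - dc2 (t + x) - dc2 (t + y) + dc2 t.
have Dpsi (t : R) : 0 < t -> is_derive t (1:R) psi (dpsi t).
  move=> t0; rewrite /psi /dpsi.
  apply: is_deriveD; last exact: Hd.
  apply: is_deriveB; last by apply: Dg; lra.
  apply: is_deriveB; by apply: Dg; lra.
have contg (a t : R) : 0 < t + a -> {for t, continuous (g a)}.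
  move=> ta; apply: differentiable_continuous; apply/derivable1_diffP.
  exact: (Dg a t ta).(ex_derive).
have contpsi (t : R) : 0 < t -> {for t, continuous psi}.
  move=> t0; apply: differentiable_continuous; apply/derivable1_diffP.
  exact: (Dpsi t t0).(ex_derive).
have cont : {within `[0, u], continuous psi}.
  apply/continuous_within_itvP => //; split.
  - by move=> t; rewrite in_itv /= => /andP[t0 _]; apply: contpsi.
  - rewrite /psi; apply: cvgD => //; apply: cvgB; [apply: cvgB|];
      apply: cvg_at_right_filter; apply: contg; lra.
  - by apply: cvg_at_left_filter; apply: contpsi.
have DD : forall t, t \in `]0, u[%R -> is_derive t (1:R) psi (dpsi t).
  by move=> t tI; apply: Dpsi; rewrite (itvP tI).
have [xi xiI E] := MVT u0 DD cont.
have xi0 : 0 < xi by rewrite (itvP xiI).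
have := conv_incr R dc2 Hc xi x y (ltW xi0) x0 y0.
rewrite /dpsi in E => Hlt.
have : 0 < (dc2 (xi + (x + y)) - dc2 (xi + x) - dc2 (xi + y) + dc2 xi) * u.
  apply: mulr_gt0 => //; rewrite addrA; lra.
have Epsi t : psi t = f (t + (x+y)) - f (t+x) - f (t+y) + f t by [].
rewrite !Epsi !add0r subr0 in E.
lra.
Qed.

End KeySec.

Section L.
Variable R : realType.
Implicit Types (f : R -> R) (t P : seq R).

Definition Hf f P : R :=
  2 * \sum_(w <- P) f (w - \sum_(z <- P) z)
  + \sum_(z <- P) \sum_(w <- P) f (z + w) - \sum_(w <- P) f (w + w)
  - 2 * ((size P)%:R - 1) * (f (\sum_(z <- P) z) + \sum_(w <- P) f w).

Lemma sum_const_seq t (c : R) : \sum_(z <- t) c = (size t)%:R * c.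
Proof. elim: t => [|a t IH]; rewrite ?big_nil ?big_cons ?IH /= ?mul0r // -addn1 natrD; ring. Qed.

Lemma sum_lin4 t (A B C D : R -> R) (K : R) :
  \sum_(z <- t) (A z + B z - C z - D z - K) =
  \sum_(z <- t) A z + \sum_(z <- t) B z - \sum_(z <- t) C z - \sum_(z <- t) D z - (size t)%:R * K.
Proof.
elim: t => [|a t IH]; first by rewrite !big_nil /= mul0r !subr0 addr0.
rewrite !big_cons IH /= -addn1 natrD; ring.
Qed.

Lemma dsum_cons (F : R -> R -> R) a l : (forall z w, F z w = F w z) ->
  \sum_(z <- a :: l) \sum_(w <- a :: l) F z w =
  F a a + 2 * \sum_(w <- l) F a w + \sum_(z <- l) \sum_(w <- l) F z w.
Proof.
move=> FS.
rewrite big_cons /= big_cons /=.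
have -> : \sum_(z <- l) \sum_(w <- a :: l) F z w = \sum_(z <- l) (F a z + \sum_(w <- l) F z w).
  by apply: eq_bigr => z _; rewrite big_cons FS.
rewrite big_split /=; ring.
Qed.

Lemma H_step f x y t : f 0 = 0 -> (forall z, f (- z) = f z) ->
  let s := \sum_(z <- t) z in
  Hf f (x :: y :: t) = Hf f ((x + y) :: t)
   + 2 * \sum_(z <- t) ((f (x + z) + f (y + z) - f (x + y + z) - f z) - (f x + f y - f (x + y)))
   + 2 * ((f (s + y) + f (s + x) - f s - f (x + y + s)) - (f x + f y - f (x + y))).
Proof.
move=> f0 fe s.
rewrite /Hf.
rewrite !dsum_cons; try by move=> z w; rewrite addrC.
rewrite !big_cons /= -/s (addrA x y s).
rewrite (_ : f (x - (x + y + s)) = f (s + y)); last by rewrite -[RHS]fe; congr f; ring.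
rewrite (_ : f (y - (x + y + s)) = f (s + x)); last by rewrite -[RHS]fe; congr f; ring.
rewrite (_ : f (x + y - (x + y + s)) = f s); last by rewrite -[RHS]fe; congr f; ring.
rewrite (sum_lin4 t (fun z => f (x + z)) (fun z => f (y + z)) (fun z => f (x + y + z)) f).
rewrite -!natr1 /=; ring.
Qed.

Lemma sum_lt0_seq t (F : R -> R) : t != [::] -> (forall z, z \in t -> F z < 0) ->
  \sum_(z <- t) F z < 0.
Proof.
elim: t => [//|a t IH] _ HF.
rewrite big_cons.
have Ha : F a < 0 by apply: HF; rewrite mem_head.
case: (eqVneq t [::]) => [->|tn]; first by rewrite big_nil addr0.
have := IH tn (fun z zt => HF z (ltac:(by rewrite in_cons zt orbT))).
lra.
Qed.

Lemma sum_gt0_seq t : t != [::] -> all (fun z => 0 < z) t -> 0 < \sum_(z <- t) z.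
Proof.
move=> tn /allP Ht.
have := sum_lt0_seq t (fun z => - z) tn (fun z zt => ltac:(rewrite oppr_lt0; exact: Ht z zt)).
rewrite sumrN; lra.
Qed.

Lemma H_neg f : f 0 = 0 -> (forall z, f (- z) = f z) ->
  (forall x y u, 0 < x -> 0 < y -> 0 < u ->
     f (x + y) - f x - f y + f 0 < f (u + (x + y)) - f (u + x) - f (u + y) + f u) ->
  forall n P, size P = n.+2 -> all (fun z => 0 < z) P ->
    Hf f P <= 0 /\ ((0 < n)%N -> Hf f P < 0).
Proof.
move=> f0 fe KEY.
elim=> [|n IH] [|x [|y t]] //= [st] /and3P[x0 y0 tpos].
- move: st => /size0nil ->.
  rewrite H_step // /= !big_nil.
  rewrite /Hf !big_cons !big_nil /= !addr0 add0r subrr f0.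
  split=> //; rewrite add0r; lra.
- have [IH1 _] := IH ((x + y) :: t) (ltac:(by rewrite /= st)) (ltac:(rewrite /= tpos andbT; lra)).
  have tn : t != [::] by apply/eqP => tE; rewrite tE in st.
  rewrite H_step //.
  set s := \sum_(z <- t) z.
  have s0 : 0 < s by apply: sum_gt0_seq.
  have T1 : \sum_(z <- t) ((f (x + z) + f (y + z) - f (x + y + z) - f z) - (f x + f y - f (x + y))) < 0.
    apply: sum_lt0_seq => // z zt.
    have z0 : 0 < z by move/allP: tpos => /(_ z zt).
    have := KEY x y z x0 y0 z0.
    rewrite (addrC z (x + y)) (addrC z x) (addrC z y); lra.
  have T2 := KEY x y s x0 y0 s0.
  rewrite (addrC s (x + y)) in T2.
  split; lra.
Qed.

End L.

Lemma dotv_sum (R : realType) (k d : nat) (a : 'I_k -> R) (e : 'I_k -> 'rV[R]_d) :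
  dotv (\sum_i a i *: e i) (\sum_i a i *: e i) =
  \sum_i \sum_j a i * a j * dotv (e i) (e j).
Proof.
rewrite /dotv.
under eq_bigr => l _ do rewrite !summxE.
under eq_bigr => l _ do rewrite mulr_suml.
under eq_bigr => l _ do under eq_bigr => i _ do rewrite mulr_sumr.
rewrite exchange_big /=; apply: eq_bigr => i _.
rewrite exchange_big /=; apply: eq_bigr => j _.
rewrite mulr_sumr; apply: eq_bigr => l _.
rewrite !mxE; ring.
Qed.

Lemma dotv_ge0 (R : realType) (d : nat) (v : 'rV[R]_d) : 0 <= dotv v v.
Proof. by rewrite /dotv; apply: sumr_ge0 => l _; rewrite -expr2 sqr_ge0. Qed.

Lemma dotv_eq0 (R : realType) (d : nat) (v : 'rV[R]_d) : dotv v v = 0 -> v = 0.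
Proof.
rewrite /dotv => /eqP; rewrite psumr_eq0 => [/allP H|l _]; last by rewrite -expr2 sqr_ge0.
apply/matrixP => i l; rewrite ord1 mxE.
have /H : l \in index_enum 'I_d by rewrite mem_index_enum.
by rewrite /= mulf_eq0 orbb => /eqP.
Qed.

Lemma sum_if (R : realType) (k : nat) (i : 'I_k) (z : R) :
  \sum_(j < k) (if j == i then z else 0) = z.
Proof. by rewrite -big_mkcond big_pred1_eq. Qed.

Lemma sum_aff (R : realType) (k : nat) (A B C : 'I_k -> R) (u v w z : R) :
  \sum_(i < k) (u * A i + v * B i + w * C i + z) =
  u * \sum_i A i + v * \sum_i B i + w * \sum_i C i + k%:R * z.
Proof.
by rewrite !big_split /= -!mulr_sumr sumr_const card_ord mulr_natl.
Qed.

Lemma core (R : realType) (c f : R -> R) (k d : nat) (e : 'I_k -> 'rV[R]_d) (m : 'I_k -> R)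
  (fE : forall z, f z = c z ^+ 2)
  (cpos : forall z, z != 0 -> 0 < c z) (ceven : forall z, c (- z) = c z)
  (f0 : f 0 = 0)
  (KEY : forall x y u, 0 < x -> 0 < y -> 0 < u ->
     f (x + y) - f x - f y + f 0 < f (u + (x + y)) - f (u + x) - f (u + y) + f u) :
  (3 <= k)%N -> satisfactory c e m -> exactly_one_negative m ->
  2 * dotv (\sum_i c (m i) *: e i) (\sum_i c (m i) *: e i) <= 0 /\
  ((3 < k)%N -> 2 * dotv (\sum_i c (m i) *: e i) (\sum_i c (m i) *: e i) < 0).
Proof.
move=> k3 [unit mnz msum dots] one.
have [i0 Hi0] : exists i0, forall i, (m i < 0) = (i == i0).
  move: one; rewrite /exactly_one_negative => /eqP /card1P [i0 Hi0].
  exists i0 => i; have := Hi0 i; rewrite !inE => <-.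
  by apply/idP/idP => [H|]; rewrite in_setE.
have neg := Hi0.
have fe z : f (- z) = f z by rewrite !fE ceven.
have apos i : 0 < c (m i) := cpos _ (mnz i).
rewrite dotv_sum.
pose Z i := f (m i) - (f (m i + m i) - f (m i) - f (m i)) / 2.
pose B i j := (f (m i + m j) - f (m i) - f (m j)) / 2 + (if j == i then Z i else 0).
have LE : \sum_i \sum_j c (m i) * c (m j) * dotv (e i) (e j) <= \sum_i \sum_j B i j.
  apply: ler_sum => i _; apply: ler_sum => j _.
  rewrite /B /Z; case: eqVneq => [->|ji].
    rewrite unit mulr1 !fE expr2; lra.
  have ij : i != j by rewrite eq_sym.
  have H := dots i j ij.
  rewrite addr0.
  apply: le_trans (ler_wpM2l _ H) _; first by rewrite mulr_ge0 // ltW.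
  rewrite !fE.
  have ci := apos i; have cj := apos j.
  rewrite (_ : c (m i) * c (m j) * ((c (m i + m j) ^+ 2 - c (m i) ^+ 2 - c (m j) ^+ 2) /
     (2 * c (m i) * c (m j))) = (c (m i + m j) ^+ 2 - c (m i) ^+ 2 - c (m j) ^+ 2) / 2) //.
  by field; rewrite !gt_eqF.
set G := \sum_i \sum_j f (m i + m j) - \sum_i f (m i + m i) - 2 * (k%:R - 2) * \sum_i f (m i).
have EB : \sum_i \sum_j B i j = G / 2.
  rewrite /B /G.
  under eq_bigr => i _ do rewrite big_split /= sum_if.
  have E1 i : \sum_j (f (m i + m j) - f (m i) - f (m j)) / 2 =
     (1/2) * \sum_j f (m i + m j) + (-(1/2)) * \sum_j f (m j) + k%:R * (- f (m i) / 2).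
    rewrite -mulr_suml !sumrB sumr_const card_ord -mulr_natl; ring.
  under eq_bigr => i _ do rewrite E1.
  rewrite /Z.
  rewrite (eq_bigr (fun i => (1/2) * \sum_j f (m i + m j) + (-(1/2)) * (f (m i + m i)) + (2 - k%:R / 2) * f (m i)
      + (-(1/2)) * \sum_j f (m j))); last first. move=> i _. lra.
  rewrite sum_aff.
  move: (\sum_i \sum_j f (m i + m j)) (\sum_i f (m i + m i)) (\sum_i f (m i)) => A1 A2 A3.
  by field.
pose P := map m (seq.filter (predC1 i0) (enum 'I_k)).
have sumP (F : R -> R) : \sum_(i | i != i0) F (m i) = \sum_(z <- P) F z.
  by rewrite big_map big_filter big_enum_cond.
have split1 (F : R -> R) : \sum_i F (m i) = F (m i0) + \sum_(z <- P) F z.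
  by rewrite (bigD1 i0) //= sumP.
have sP : \sum_(z <- P) z = - m i0.
  have := split1 id; rewrite msum /= => H; lra.
have szP : ((size P).+1)%:R = k%:R :> R.
  have := split1 (fun _ => 1); rewrite sum_const_seq sumr_const card_ord /= => H.
  by rewrite H -natr1; lra.
move/eqP: szP; rewrite eqr_nat => /eqP szP.
have Ppos : all (fun z => 0 < z) P.
  apply/allP => z /mapP [i]; rewrite mem_filter => /andP [ni0 _] ->.
  by rewrite lt0r mnz /= leNgt neg.
have EG : G = Hf R f P.
  rewrite /G /Hf.
  rewrite (split1 (fun z => f (z + z))) (split1 f) sP.
  under eq_bigr => i _ do rewrite (split1 (fun w => f (m i + w))).
  rewrite (split1 (fun z => f (z + m i0) + \sum_(w <- P) f (z + w))) big_split /=.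
  under [\sum_(w <- P) f (w - - m i0)]eq_bigr => w _ do rewrite opprK.
  under [\sum_(w <- P) f (m i0 + w)]eq_bigr => w _ do rewrite addrC.
  rewrite -szP fe -[(size P).+1%:R]natr1; ring.
have szP' : size P = (k - 3).+2 by lia.
have [HP1 HP2] := H_neg R f f0 fe KEY (k - 3) P szP' Ppos.
have LE2 : 2 * \sum_i \sum_j c (m i) * c (m j) * dotv (e i) (e j) <= Hf R f P.
  rewrite -EG; have : G = 2 * (G / 2) by field.
  move=> ->; rewrite ler_pM2l // -EB //.
split; first by apply: le_trans LE2 HP1.
move=> k4; apply: le_lt_trans LE2 (HP2 _).
by rewrite subn_gt0.
Qed.

Theorem theorem3 (R : realType) (c : R -> R) (d : nat) :
  (2 <= d)%N -> admissible_c c ->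
  (forall (k : nat) (e : 'I_k -> 'rV[R]_d) (m : 'I_k -> R),
      (3 < k)%N -> ~ (satisfactory c e m /\ exactly_one_negative m)) /\
  (forall (e : 'I_3 -> 'rV[R]_d) (m : 'I_3 -> R),
      satisfactory c e m -> exactly_one_negative m ->
      (\rank (\matrix_(i < 3) e i) <= 2)%N).
Proof.
move=> d2 [[c0 cnn] cinc ccon ceven [dc2 [Hd Hlim Hconv]]].
pose f := fun y : R => c y ^+ 2.
have fE z : f z = c z ^+ 2 by [].
have cpos z : z != 0 -> 0 < c z.
  move=> z0; case: (ltgtP z 0) z0 => // zs _.
    by rewrite -ceven -c0; apply: cinc => //; rewrite oppr_gt0.
  by rewrite -c0; apply: cinc.
have f0 : f 0 = 0 by rewrite /f c0 expr2 mulr0.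
have Hc0 : (f x @[x --> 0^'+] --> f 0)%classic.
  have H1 : ((fun h => h * (h^-1 * (c h ^+ 2 - c 0 ^+ 2))) x @[x --> 0^'+] --> 0 * dc2 0)%classic.
    apply: cvgM => //; apply: cvg_at_right_filter; exact: cvg_id.
  rewrite mul0r in H1; rewrite f0.
  apply: cvg_trans H1; apply: near_eq_cvg.
  near=> h.
  have h0 : 0 < h by near: h; exact: nbhs_right_gt.
  by rewrite /f c0 expr0n /= subr0 mulrA mulfV ?mul1r // gt_eqF.
have KEY := key R f dc2 Hd Hc0 Hconv.
split.
- move=> k e m k4 [sat one].
  have [_ H] := core R c f k d e m fE cpos ceven f0 KEY (ltnW k4) sat one.
  have := H k4.
  have := dotv_ge0 R d (\sum_i c (m i) *: e i).
  lra.
- move=> e m sat one.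
  have [H _] := core R c f 3 d e m fE cpos ceven f0 KEY (leqnn 3) sat one.
  have V0 : \sum_i c (m i) *: e i = 0.
    apply: dotv_eq0.
    have := dotv_ge0 R d (\sum_i c (m i) *: e i).
    lra.
  rewrite leqNgt; apply/negP => rk.
  have rf : row_free (\matrix_(i < 3) e i).
    by rewrite /row_free eqn_leq rank_leq_row rk.
  have := mulmx_free_eq0 (\row_i c (m i)) rf.
  rewrite mulmx_sum_row.
  have -> : \sum_i (\row_i0 c (m i0)) 0 i *: row i (\matrix_(i1 < 3) e i1) = \sum_i c (m i) *: e i.
    by apply: eq_bigr => i _; rewrite mxE rowK.
  rewrite V0 eqxx => /esym /eqP /matrixP /(_ 0 0).
  rewrite !mxE => /eqP; rewrite gt_eqF //.
  apply: cpos; case: sat => _ mnz _ _; exact: mnz.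
Unshelve. all: by end_near.
Qed.
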